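(* Let $\mathcal{A}$ be a central and essential arrangement in $\mathbb{Q}^l$ as in the context, with $\lcm$-period $\rho_0$. If a prime $p$ is not good for $\mathcal{A}$, then $p$ divides $\rho_0$.
   Context: $\mathcal{A}=\{H_1,\dots,H_n\}$: $n$ distinct linear hyperplanes in $\mathbb{Q}^l$ with $\bigcap H_i=\{0\}$, $H_i=\{\alpha_i=0\}$, $\alpha_i=\sum_{k=1}^lc_{ki}x_k$ with $c_{ki}\in\mathbb{Z}$ not all divisible by any prime. $p$ is good for $\mathcal{A}$ if the reduction mod $p$ of $\prod\alpha_i$ is reduced, equivalently no reduction $(\alpha_i)_p$ is a scalar multiple of $(\alpha_j)_p$ for $i<j$. Let $C=(c_{ki})\in\mathrm{Mat}_{l\times n}(\mathbb{Z})$ with columns $c_1,\dots,c_n$; for nonempty $J=\{i_1<\dots<i_k\}\subseteq[n]$, $C_J=(c_{i_1},\dots,c_{i_k})$. Its Smith normal form has nonzero diagonal entries $e_{J,1}\mid\dots\mid e_{J,r}$ (positive), $r=\mathrm{rk}(C_J)$; set $e(J)=e_{J,r}$. The $\lcm$-period is $\rho_0=\lcm\{e(J): J\subseteq[n],\ 1\le|J|\le l\}$. *)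

(* Defs.v *)
From HB Require Import structures.
From mathcomp Require Import all_boot all_order all_algebra.
Set Implicit Arguments. Unset Strict Implicit. Unset Printing Implicit Defensive.
Import Order.TTheory GRing.Theory Num.Theory.
Local Open Scope ring_scope.

(* The arrangement is given by the integer matrix C : 'M[int]_(l, n);
   column i holds the coefficients c_{1i},...,c_{li} of alpha_i. *)

Definition colsJ (l n : nat) (C : 'M[int]_(l, n)) (J : {set 'I_n}) :
  'M[int]_(l, #|J|) :=
  \matrix_(k, i) C k (enum_val i).

Definition smith_nonzero_diag (a b : nat) (M : 'M[int]_(a, b)) (d : seq int) : Prop :=
  exists2 L : 'M[int]_a, L \in unitmx &
  exists2 R : 'M[int]_b, R \in unitmx &
    [/\ all (fun x => 0 < x) d, sorted dvdz d, (size d <= minn a b)%N &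
        M = L *m (\matrix_(i, j) (d`_i *+ (i == j :> nat))) *m R].

Definition is_last_invariant_factor (a b : nat) (M : 'M[int]_(a, b)) (e : nat) : Prop :=
  exists d : seq int, smith_nonzero_diag M d /\ d != [::] /\ (e%:Z = last 1 d).

Definition red_col (p l n : nat) (C : 'M[int]_(l, n)) (i : 'I_n) : 'cV['F_p]_l :=
  map_mx (fun z : int => z%:~R) (col i C).

Definition good_prime (p l n : nat) (C : 'M[int]_(l, n)) : Prop :=
  forall i j : 'I_n, (i < j)%N ->
    ~ exists lam : 'F_p, red_col p C i = lam *: red_col p C j.

Definition primitive_columns (l n : nat) (C : 'M[int]_(l, n)) : Prop :=
  forall (i : 'I_n) (q : nat), prime q -> exists k : 'I_l, ~~ ((q%:Z %| C k i)%Z).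

Definition distinct_hyperplanes (l n : nat) (C : 'M[int]_(l, n)) : Prop :=
  forall i j : 'I_n, i != j ->
    ~ exists lam : rat, map_mx intr (col i C) = lam *: map_mx intr (col j C).

Definition essential (l n : nat) (C : 'M[int]_(l, n)) : Prop :=
  forall x : 'rV[rat]_l, x *m map_mx intr C = 0 -> x = 0.

Definition lcm_period (l n : nat) (e : {set 'I_n} -> nat) : nat :=
  \big[lcmn/1%N]_(J : {set 'I_n} | (0 < #|J| <= l)%N) e J.

(* Main.v *)
Require Import Defs.
From HB Require Import structures.
From mathcomp Require Import all_boot all_order all_algebra.
From mathcomp Require Import zify ring.
Import Order.TTheory GRing.Theory Num.Theory.
Local Open Scope ring_scope.
Lemma unit_map (R : comUnitRingType) (m : nat) (A : 'M[int]_m) :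
  A \in unitmx -> map_mx (fun z : int => z%:~R : R) A \in unitmx.
Proof.
by rewrite !unitmxE det_map_mx => H; apply: rmorph_unit.
Qed.

Lemma key (a b : nat) (M : 'M[int]_(a,b)) (d : seq int) (p : nat) :
  prime p -> smith_nonzero_diag M d ->
  (forall u : 'cV[rat]_b, map_mx intr M *m u = 0 -> u = 0) ->
  (exists2 v : 'cV['F_p]_b, v != 0 & map_mx intr M *m v = 0) ->
  (p%:Z %| last 1 d)%Z.
Proof.
move=> pr [L uL [R uR [dpos dsort dsize eM]]] noker [v vn0 vker].
set D := \matrix_(i, j) _ in eM.
have sizeb : (b <= size d)%N.
  rewrite leqNgt; apply/negP => lt.
  pose k := Ordinal lt.
  pose u := invmx (map_mx (fun z : int => z%:~R : rat) R) *m delta_mx k (0 : 'I_1).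
  have uRq := unit_map rat _ _ uR.
  have : u = 0.
    apply: noker; rewrite eM !map_mxM /u -!mulmxA mulKVmx //.
    suff -> : map_mx (fun z : int => z%:~R : rat) D *m delta_mx k (0 : 'I_1) = 0 by rewrite mulmx0.
    apply/matrixP => x y; rewrite !mxE big1 // => z _.
    rewrite !mxE; case: (eqVneq z k) => [->|nz].
      have -> : d`_x *+ (x == k :> nat) = 0.
        by case: eqP => [->|_]; rewrite ?mulr0n // nth_default.
      by rewrite mul0r.
    by rewrite /= mulr0.
  move/(congr1 (mulmx (map_mx (fun z : int => z%:~R : rat) R))).
  rewrite /u mulKVmx // mulmx0 => /matrixP /(_ k 0).
  by rewrite !mxE !eqxx /= => /eqP; rewrite oner_eq0.
have sizeE : size d = b.
  by apply/eqP; rewrite eqn_leq sizeb andbT (leq_trans dsize) // geq_minr.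
have ba : (b <= a)%N by rewrite -sizeE (leq_trans dsize) // geq_minl.
have uLp := unit_map 'F_p _ _ uL.
have uRp := unit_map 'F_p _ _ uR.
pose w := map_mx (fun z : int => z%:~R : 'F_p) R *m v.
have w0 : w != 0.
  apply: contraNneq vn0 => /(congr1 (mulmx (invmx (map_mx (fun z : int => z%:~R : 'F_p) R)))).
  by rewrite /w mulKmx // mulmx0 => ->.
have Dw : map_mx (fun z : int => z%:~R : 'F_p) D *m w = 0.
  move: vker; rewrite eM !map_mxM -!mulmxA.
  move/(congr1 (mulmx (invmx (map_mx (fun z : int => z%:~R : 'F_p) L)))).
  by rewrite mulKmx // mulmx0.
have /existsP [k wk] : [exists k : 'I_b, w k 0 != 0].
  apply: contraR w0 => /existsPn H.
  apply/eqP/matrixP => x y; rewrite ord1 [RHS]mxE.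
  by have := H x; rewrite negbK => /eqP.
pose k' := widen_ord ba k.
have := congr1 (fun M : 'M['F_p]_(a,1) => M k' 0) Dw; rewrite /= !mxE (bigD1 k) //= big1 ?addr0.
  rewrite !mxE eqxx mulr1n => /eqP; move: wk; rewrite mxE => wk.
  rewrite mulf_eq0 (negbTE wk) orbF.
  rewrite -(dvdz_pcharf (pchar_Fp pr)) => pdk.
  apply: (dvdz_trans pdk); rewrite -nth_last (set_nth_default 1 0) ?sizeE //.
  have kb := ltn_ord k.
  apply: (sorted_leq_nth dvdz_trans dvdzz) => //; rewrite ?inE ?sizeE /=; lia.
  exact: (ltn_ord k).
move=> z nz; rewrite !mxE.
have -> : (k' == z :> nat) = false.
  by apply: contraNF nz => /eqP H; apply/eqP/val_inj; rewrite /= -H.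
by rewrite mulr0n mul0r.
Qed.
Lemma pairQ (l n : nat) (C : 'M[int]_(l, n)) (i j : 'I_n) :
  distinct_hyperplanes C -> i != j ->
  forall ui uj : rat,
  (forall k, ui * (C k i)%:~R + uj * (C k j)%:~R = 0) -> ui = 0 /\ uj = 0.
Proof.
move=> dist neq ui uj H.
have [ui0|uin] := eqVneq ui 0.
  split => //; have [//|ujn] := eqVneq uj 0.
  exfalso; apply: (dist j i); first by rewrite eq_sym.
  exists 0; apply/matrixP => k y; rewrite !mxE mul0r.
  by have /eqP := H k; rewrite ui0 mul0r add0r mulf_eq0 (negbTE ujn) /= => /eqP.
exfalso; apply: (dist i j neq); exists (- uj / ui).
apply/matrixP => k y; rewrite !mxE.
have E := H k.
have -> : ((C k i)%:~R : rat) = ui^-1 * (ui * (C k i)%:~R) by rewrite mulKf.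
have -> : ui * (C k i)%:~R = - (uj * (C k j)%:~R) by apply/eqP; rewrite -addr_eq0 E.
by field.
Qed.

Lemma sum_pair (R : zmodType) n (i j : 'I_n) (F : 'I_n -> R) : i != j ->
  \sum_(x < #|[set i; j]|) F (enum_val x) = F i + F j.
Proof.
move=> neq; rewrite -big_enum_val big_setU1 ?big_set1 //= inE.
by [].
Qed.

Theorem proposition7p4 (l n : nat) (C : 'M[int]_(l, n))
  (e : {set 'I_n} -> nat) (p : nat) :
  primitive_columns C -> distinct_hyperplanes C -> essential C ->
  (forall J : {set 'I_n}, (0 < #|J| <= l)%N ->
     is_last_invariant_factor (colsJ C J) (e J)) ->
  prime p -> ~ good_prime p C ->
  (p %| lcm_period l e)%N.
Proof.
move=> prim dist ess heJ pr ng.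
apply/negPn/negP => /negP Hnd; apply: ng => i j ij [lam Hlam]; apply: Hnd.
have neq : i != j by rewrite neq_ltn ij.
have pr2 : prime 2 by [].
have l2 : (2 <= l)%N.
  have [k0 nd] := prim j 2 pr2.
  rewrite leqNgt; apply/negP => l1.
  have allk : forall k : 'I_l, k = k0.
    move=> k; apply: ord_inj; have := ltn_ord k; have := ltn_ord k0; lia.
  have [] := @pairQ _ _ C i j dist neq ((C k0 j)%:~R) (- (C k0 i)%:~R).
    by move=> k; rewrite (allk k); ring.
  move/eqP; rewrite intr_eq0 => /eqP cj0 _.
  by move: nd; rewrite cj0 dvdz0.
set J := [set i; j].
have cJ : #|J| = 2 by rewrite cards2 neq.
have PJ : (0 < #|J| <= l)%N by rewrite cJ.
have [d [sm [_ eJ]]] := heJ J PJ.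
apply: (biglcmn_sup J) => //.
have iJ : i \in J by rewrite !inE eqxx.
have jJ : j \in J by rewrite !inE eqxx orbT.
have noker : forall u : 'cV[rat]_#|J|, map_mx intr (colsJ C J) *m u = 0 -> u = 0.
  move=> u /matrixP H.
  have ux : forall x, u x 0 = u (enum_rank_in iJ (enum_val x)) 0.
    by move=> x; rewrite enum_valK_in.
  have [ui0 uj0] : u (enum_rank_in iJ i) 0 = 0 /\ u (enum_rank_in iJ j) 0 = 0.
    apply: (@pairQ _ _ C i j dist neq) => k.
    have := H k 0; rewrite !mxE.
    under eq_bigr => x _ do rewrite !mxE ux.
    rewrite (@sum_pair _ _ i j (fun y => (C k y)%:~R * u (enum_rank_in iJ y) 0) neq) => E.
    by rewrite mulrC [_ * (C k j)%:~R]mulrC.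
  apply/matrixP => x y; rewrite ord1 [RHS]mxE (ux x).
  have : enum_val x \in J := enum_valP x.
  by rewrite !inE => /orP [] /eqP ->.
have ker : exists2 v : 'cV['F_p]_#|J|, v != 0 & map_mx intr (colsJ C J) *m v = 0.
  exists (\col_x (if enum_val x == i then 1 else - lam)).
    apply/eqP => /matrixP /(_ (enum_rank_in iJ i) 0).
    by rewrite !mxE enum_rankK_in // eqxx => /eqP; rewrite oner_eq0.
  apply/matrixP => k y; rewrite !mxE.
  under eq_bigr => x _ do rewrite !mxE.
  rewrite (@sum_pair _ _ i j (fun y => (C k y)%:~R * (if y == i then 1 else - lam)) neq).
  rewrite eqxx eq_sym (negbTE neq).
  have := congr1 (fun M : 'cV['F_p]_l => M k 0) Hlam; rewrite /red_col !mxE => ->.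
  ring.
have := @key _ _ (colsJ C J) d p pr sm noker ker.
by rewrite -eJ dvdzE.
Qed.
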